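(* Fix $n,m,\mu\in\mathbb{N}$ and $\delta\in\mathbb{R}$, and fix angles $\theta_1,\dots,\theta_n$ and $\phi_1,\dots,\phi_m$ satisfying $|\theta_i|,|\phi_j|<\pi/2$ if $\mu=1$ and $|\theta_i|,|\phi_j|<\pi/(2(\mu-1))$ if $\mu>1$. Let $S$ be the set of triples $(x,v,\zeta)\in[0,+\infty)^{n+m}\times[0,+\infty)^n\times(0,+\infty)^m$ with $x_1\geq x_2\geq\cdots\geq x_{n+m}$ such that $$x\succ_w (v_1,\dots,v_n,\zeta_1^\mu,\dots,\zeta_m^\mu)$$ and $$\sum_{i=1}^n x_i^{k/\mu}+\sum_{i=1}^n v_i^{k/\mu}\cos(\theta_i k)\;\geq\;\sum_{i=1}^m \zeta_i^{k}\cos(\phi_i k)\quad\text{for all }k\in\{1,\dots,\mu-1\}.$$ Then $S$ is a convex set.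
   Context: For $y\in\mathbb{R}^{N}$, $y^{\downarrow}$ is the vector of its components sorted in descending order; $x\succ_w y$ (weak majorization) means $\sum_{i=1}^k x^{\downarrow}_i\geq\sum_{i=1}^k y^{\downarrow}_i$ for all $k=1,\dots,N$. Interpretation: for a transfer function with poles $p\in\mathbb{C}^n$ ($p_1,\dots,p_{n_r}$ real, the rest non-real) and zeros $z\in\mathbb{C}^m$, with $\theta_i=\angle(p_i+\delta)$, $\phi_j=\angle(z_j+\delta)$, $w_i=(p_i+\delta)^\mu$ for $i\le n_r$ and $w_i=0$ otherwise, $v_i=0$ for $i\le n_r$, $v_i=|p_i+\delta|^\mu$ for $n_r<i\le n$, and $\zeta_j=|z_j+\delta|$, the variables are $x=w^{\downarrow}$, $(v_1,\dots,v_n)$ and $\zeta$, and the two displayed conditions are the sufficient conditions for logarithmic complete monotonicity expressed in these variables. *)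

(* Defs.v *)
From HB Require Import structures.
From mathcomp Require Import all_boot all_order all_algebra.
From mathcomp Require Import all_classical all_reals all_analysis.
Set Implicit Arguments. Unset Strict Implicit. Unset Printing Implicit Defensive.
Import Order.TTheory GRing.Theory Num.Theory.
Local Open Scope ring_scope.

Section Defs.
Variable R : realType.

Definition rowseq N (x : 'rV[R]_N) : seq R := [seq x 0 i | i <- enum 'I_N].

Definition sort_desc (s : seq R) : seq R := sort (fun a b => b <= a) s.

Definition wmaj N (x y : 'rV[R]_N) : Prop :=
  forall k : nat, (1 <= k <= N)%N ->
    \sum_(i < k) (sort_desc (rowseq y))`_i <= \sum_(i < k) (sort_desc (rowseq x))`_i.

Definition in_S (n m mu : nat) (theta : 'I_n -> R) (phi : 'I_m -> R)
  (x : 'rV[R]_(n + m)) (v : 'rV[R]_n) (z : 'rV[R]_m) : Prop :=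
  (forall i, 0 <= x 0 i) /\
  (forall i, 0 <= v 0 i) /\
  (forall j, 0 < z 0 j) /\
  (forall i j : 'I_(n + m), (i <= j)%N -> x 0 j <= x 0 i) /\
  wmaj x (row_mx v (map_mx (fun a => a ^+ mu) z)) /\
  (forall k : nat, (1 <= k <= mu - 1)%N ->
        \sum_(i < n) powR (x 0 (lshift m i)) (k%:R / mu%:R)
        + \sum_(i < n) powR (v 0 i) (k%:R / mu%:R) * cos (theta i * k%:R)
        >= \sum_(j < m) (z 0 j) ^+ k * cos (phi j * k%:R)).

End Defs.

(* Main.v *)
Require Import Defs.
From HB Require Import structures.
From mathcomp Require Import all_boot all_order all_algebra all_fingroup.
From mathcomp Require Import all_classical all_reals all_analysis.
Import Order.TTheory GRing.Theory Num.Theory.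
Local Open Scope ring_scope.

From mathcomp Require Import ring.
Section A.
Variable R : realType.

Lemma cvx_powR (p t a b : R) : 1 <= p -> 0 <= t <= 1 -> 0 <= a -> 0 <= b ->
  powR (t * a + (1 - t) * b) p <= t * powR a p + (1 - t) * powR b p.
Proof.
move=> p1 /andP[t0 t1] a0 b0.
have := @convex_powR R p p1 (Itv01 t0 t1) a b.
rewrite !inE /= !in_itv /= !andbT => /(_ a0 b0).
by rewrite !convRE.
Qed.

Lemma cvx_exp (k : nat) (t a b : R) : 0 <= t <= 1 -> 0 <= a -> 0 <= b ->
  (t * a + (1 - t) * b) ^+ k <= t * a ^+ k + (1 - t) * b ^+ k.
Proof.
move=> /andP[t0 t1] a0 b0; case: k => [|k].
  by rewrite !expr0 !mulr1 addrC subrK.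
have H := @cvx_powR (k.+1)%:R t a b; rewrite -!powR_mulrn //.
  by apply: H => //; [rewrite ler1n | apply/andP].
by rewrite addr_ge0 // mulr_ge0 // subr_ge0.
Qed.

Lemma ccv_powR (p t a b : R) : 0 < p <= 1 -> 0 <= t <= 1 -> 0 <= a -> 0 <= b ->
  t * powR a p + (1 - t) * powR b p <= powR (t * a + (1 - t) * b) p.
Proof.
move=> /andP[p0 p1] /andP[t0 t1] a0 b0.
have q1 : 1 <= p^-1 by rewrite invf_ge1.
have H := @cvx_powR p^-1 t (powR a p) (powR b p) q1 (introT andP (conj t0 t1))
   (powR_ge0 _ _) (powR_ge0 _ _).
rewrite -!powRrM !mulfV ?gt_eqF // !powRr1 // in H.
have s0 : 0 <= 1 - t by rewrite subr_ge0.
have H2 := @ge0_ler_powR R p (ltW p0) _ _ _ _ H.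
rewrite -powRrM mulVf ?gt_eqF // powRr1 in H2; last first.
  by rewrite addr_ge0 // mulr_ge0 // powR_ge0.
apply: H2; rewrite nnegrE ?addr_ge0 // ?mulr_ge0 // ?powR_ge0.
by [].

Qed.

Lemma card_pref (N k : nat) : (k <= N)%N -> #|[set i : 'I_N | (i < k)%N]| = k.
Proof.
move=> kN; rewrite -sum1_card.
rewrite (eq_bigl (fun i : 'I_N => (i < k)%N)); last by move=> i; rewrite inE.
by rewrite -(big_ord_widen _ (fun _ => 1%N) kN) sum1_card card_ord.
Qed.

Lemma pref_max (N k : nat) (u : 'I_N -> R) (G : {set 'I_N}) :
  (forall i j : 'I_N, (i <= j)%N -> u j <= u i) -> #|G| = k ->
  \sum_(i in G) u i <= \sum_(i : 'I_N | (i < k)%N) u i.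
Proof.
move=> hu cG.
have kN : (k <= N)%N by rewrite -cG -[X in (_ <= X)%N](card_ord N) max_card.
set L := [set i : 'I_N | (i < k)%N].
rewrite [X in _ <= X](eq_bigl (fun i => i \in L)); last by move=> i; rewrite inE.
rewrite (big_setID L) [X in _ <= X](big_setID G) /= finset.setIC lerD2l.
have cD : #|G :\: L| = #|L :\: G|.
  by rewrite !cardsD cG card_pref // finset.setIC.
case: k kN cG @L cD => [|k] kN cG L cD.
  have e : L :\: G = finset.set0.
    by apply/setP => i; rewrite !inE; case: i => [[|i] hi]; rewrite andbC.
  have /eqP : #|G :\: L| = 0%N by rewrite cD e cards0.
  by rewrite cards_eq0 e => /eqP ->; rewrite !big_set0.
have k1 : (k < N)%N by [].
pose T := u (Ordinal k1).
apply: (@le_trans _ _ (\sum_(i in G :\: L) T)).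
  apply: ler_sum => i; rewrite !inE => /andP[hi _]; apply: hu => /=.
  by rewrite -leqNgt in hi; apply: ltnW.
rewrite sumr_const cD -sumr_const.
apply: ler_sum => i; rewrite !inE => /andP[_ hi]; apply: hu => /=.
by rewrite -ltnS.
Qed.

Lemma sort_rep N (w : 'I_N -> R) : exists p : 'S_N,
  forall j : 'I_N, (sort_desc [seq w i | i <- enum 'I_N])`_j = w (p j).
Proof.
have : perm_eq (sort_desc [seq w i | i <- enum 'I_N]) [tuple w i | i < N].
  by rewrite /sort_desc perm_sort /=.
case/tuple_permP => p ->.
exists p => j.
by rewrite (nth_map j) ?size_enum_ord // nth_ord_enum tnth_map tnth_ord_tuple.
Qed.

Lemma sort_noninc N (w : 'I_N -> R) (i j : 'I_N) : (i <= j)%N ->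
  (sort_desc [seq w i | i <- enum 'I_N])`_j <= (sort_desc [seq w i | i <- enum 'I_N])`_i.
Proof.
move=> ij.
have hs : sorted (fun a b : R => b <= a) (sort_desc [seq w i | i <- enum 'I_N]).
  by apply: sort_sorted => a b; exact: le_total.
have := sorted_leq_nth _ _ 0 hs; apply.
- by move=> a b c /= h1 h2; exact: le_trans h2 h1.
- by move=> a /=.
- by rewrite inE size_sort size_map size_enum_ord.
- by rewrite inE size_sort size_map size_enum_ord.
- exact: ij.
Qed.


Lemma T1 N k (w : 'I_N -> R) (G : {set 'I_N}) : #|G| = k ->
  \sum_(i in G) w i <= \sum_(i < k) (sort_desc [seq w i | i <- enum 'I_N])`_i.
Proof.
move=> cG.
have kN : (k <= N)%N by rewrite -cG -[X in (_ <= X)%N](card_ord N) max_card.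
have [p hp] := @sort_rep N w.
rewrite (big_ord_widen _ (fun i => (sort_desc [seq w i | i <- enum 'I_N])`_i) kN).
rewrite [X in _ <= X](eq_bigr (fun j : 'I_N => (sort_desc [seq w i | i <- enum 'I_N])`_j)) //.
apply: (le_trans _ (@pref_max N k _ _ (@sort_noninc N w) (etrans (card_preimset G (@perm_inj _ p)) cG))).
rewrite (reindex_inj (@perm_inj _ p)) /=.
rewrite le_eqVlt; apply/orP; left; apply/eqP; apply: eq_big => j; first by rewrite inE.
by move=> _; rewrite hp.
Qed.

Lemma T2 N k (w : 'I_N -> R) : (k <= N)%N -> exists G : {set 'I_N}, #|G| = k /\
  \sum_(i < k) (sort_desc [seq w i | i <- enum 'I_N])`_i = \sum_(i in G) w i.
Proof.
move=> kN.
have [p hp] := @sort_rep N w.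
exists ((p^-1)%g @^-1: [set j : 'I_N | (j < k)%N]); split.
  by rewrite card_preimset ?card_pref //; exact: perm_inj.
rewrite (big_ord_widen _ (fun i => (sort_desc [seq w i | i <- enum 'I_N])`_i) kN).
rewrite [X in _ = X](reindex_inj (@perm_inj _ p)) /=.
apply: eq_big => j; first by rewrite !inE permK.
by move=> _; rewrite hp.
Qed.


Lemma topk_sorted N k (x : 'I_N -> R) : (k <= N)%N ->
  (forall i j : 'I_N, (i <= j)%N -> x j <= x i) ->
  \sum_(i < k) (sort_desc [seq x i | i <- enum 'I_N])`_i <= \sum_(i : 'I_N | (i < k)%N) x i.
Proof.
move=> kN hx; have [G [cG ->]] := @T2 N k x kN.
exact: pref_max.
Qed.

Lemma wmaj_comb N (t : R) (x1 x2 y y1 y2 : 'rV[R]_N) : 0 <= t <= 1 ->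
 (forall i j : 'I_N, (i <= j)%N -> x1 0 j <= x1 0 i) ->
 (forall i j : 'I_N, (i <= j)%N -> x2 0 j <= x2 0 i) ->
 (forall i, y 0 i <= t * y1 0 i + (1 - t) * y2 0 i) ->
 wmaj x1 y1 -> wmaj x2 y2 -> wmaj (t *: x1 + (1 - t) *: x2) y.
Proof.
move=> /andP[t0 t1] hx1 hx2 hy w1 w2 k /andP[k1 kN].
have s0 : 0 <= 1 - t by rewrite subr_ge0.
have := w1 k; rewrite k1 kN => /(_ isT) w1k.
have := w2 k; rewrite k1 kN => /(_ isT) w2k.
rewrite /rowseq in w1k w2k *.
have [G [cG ->]] := @T2 N k (fun i => y 0 i) kN.
apply: (@le_trans _ _ (t * \sum_(i in G) y1 0 i + (1 - t) * \sum_(i in G) y2 0 i)).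
  by rewrite !mulr_sumr -big_split /=; apply: ler_sum => i _; exact: hy.
apply: (@le_trans _ _ (t * \sum_(i : 'I_N | (i < k)%N) x1 0 i
                     + (1 - t) * \sum_(i : 'I_N | (i < k)%N) x2 0 i)).
  apply: lerD; apply: ler_wpM2l => //.
    apply: (le_trans (@T1 N k (fun i => y1 0 i) G cG)); apply: (le_trans w1k).
    exact: (@topk_sorted N k (fun i => x1 0 i)).
  apply: (le_trans (@T1 N k (fun i => y2 0 i) G cG)); apply: (le_trans w2k).
  exact: (@topk_sorted N k (fun i => x2 0 i)).
rewrite !mulr_sumr -big_split /=.
have := @T1 N k (fun i => (t *: x1 + (1 - t) *: x2) 0 i) _ (@card_pref N k kN).
apply: le_trans; rewrite le_eqVlt; apply/orP; left; apply/eqP.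
by apply: eq_big => i; rewrite ?inE // => _; rewrite !mxE.
Qed.


Lemma cos_nonneg (mu k : nat) (a : R) : (1 < mu)%N -> (1 <= k <= mu - 1)%N ->
  `|a| < pi / (2 * (mu%:R - 1)) -> 0 <= cos (a * k%:R).
Proof.
move=> mu1 /andP[k1 kmu] ha.
have M0 : 0 < mu%:R - 1 :> R by rewrite subr_gt0 ltr1n.
apply: cos_ge0_pihalf; rewrite -ler_norml normrM normr_nat.
have hk : k%:R <= mu%:R - 1 :> R.
  have e : (mu - 1)%:R = mu%:R - 1 :> R by rewrite natrB // ltnW.
  by rewrite -e ler_nat.
apply: (le_trans (ler_wpM2l (normr_ge0 _) hk)).
rewrite invfM mulrA ltr_pdivlMr // in ha.
exact: ltW.
Qed.

End A.

Theorem proposition9 (R : realType) (n m mu : nat) (delta : R)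
  (theta : 'I_n -> R) (phi : 'I_m -> R)
  (Hth1 : mu = 1%N -> forall i, `|theta i| < pi / 2)
  (Hph1 : mu = 1%N -> forall j, `|phi j| < pi / 2)
  (Hth : (1 < mu)%N -> forall i, `|theta i| < pi / (2 * (mu%:R - 1)))
  (Hph : (1 < mu)%N -> forall j, `|phi j| < pi / (2 * (mu%:R - 1))) :
  forall (x1 x2 : 'rV[R]_(n + m)) (v1 v2 : 'rV[R]_n) (z1 z2 : 'rV[R]_m) (t : R),
    0 <= t <= 1 ->
    in_S mu theta phi x1 v1 z1 ->
    in_S mu theta phi x2 v2 z2 ->
    in_S mu theta phi (t *: x1 + (1 - t) *: x2) (t *: v1 + (1 - t) *: v2)
                      (t *: z1 + (1 - t) *: z2).
Proof.
move=> x1 x2 v1 v2 z1 z2 t ht [hx1 [hv1 [hz1 [hs1 [hw1 hk1]]]]]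
  [hx2 [hv2 [hz2 [hs2 [hw2 hk2]]]]].
have /andP[t0 t1] := ht.
have s0 : 0 <= 1 - t by rewrite subr_ge0.
split.
  by move=> i; rewrite !mxE addr_ge0 // mulr_ge0.
split.
  by move=> i; rewrite !mxE addr_ge0 // mulr_ge0.
split.
  move=> j; rewrite !mxE.
  have := @convR_gt0 R (z1 0 j) (z2 0 j) (Itv01 t0 t1) (hz1 j) (hz2 j).
  by rewrite convRE.
split.
  by move=> i j ij; rewrite !mxE lerD // ler_wpM2l // ?hs1 ?hs2.
split.
  apply: (@wmaj_comb R _ t x1 x2 _ _ _ ht hs1 hs2 _ hw1 hw2).
  move=> i; rewrite -(fintype.splitK i); case: (fintype.split i) => j /=.
    by rewrite !row_mxEl !mxE.
  rewrite !row_mxEr !mxE.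
  by apply: cvx_exp => //; apply: ltW.
move=> k hk.
have mu1 : (1 < mu)%N.
  by case/andP: hk => k1 kmu; rewrite -subn_gt0 (leq_trans k1 kmu).
have /andP[k1 kmu] := hk.
have p0 : 0 < k%:R / mu%:R :> R by rewrite divr_gt0 // ltr0n // (ltn_trans _ mu1).
have p1 : k%:R / mu%:R <= 1 :> R.
  rewrite ler_pdivrMr ?ltr0n ?(ltn_trans _ mu1) // mul1r ler_nat.
  by apply: (leq_trans kmu); rewrite leq_subr.
have hp : (0 < k%:R / mu%:R :> R) && (k%:R / mu%:R <= 1 :> R) by rewrite p0 p1.
apply: (@le_trans _ _ (t * \sum_(j < m) z1 0 j ^+ k * cos (phi j * k%:R)
   + (1 - t) * \sum_(j < m) z2 0 j ^+ k * cos (phi j * k%:R))).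
  rewrite !mulr_sumr -big_split /=; apply: ler_sum => j _; rewrite !mxE.
  have hc := @cos_nonneg R mu k (phi j) mu1 hk (Hph mu1 j).
  apply: (le_trans (ler_wpM2r hc (@cvx_exp R k t _ _ ht (ltW (hz1 j)) (ltW (hz2 j))))).
  by rewrite le_eqVlt; apply/orP; left; apply/eqP; ring.
apply: (le_trans (lerD (ler_wpM2l t0 (hk1 k hk)) (ler_wpM2l s0 (hk2 k hk)))).
rewrite !mulrDr !mulr_sumr addrACA -!big_split /=.
apply: ler_sum => i _; rewrite !mxE; apply: lerD.
  exact: ccv_powR.
have hc := @cos_nonneg R mu k (theta i) mu1 hk (Hth mu1 i).
rewrite !mulrA -mulrDl; apply: ler_wpM2r => //.
exact: ccv_powR.
Qed.
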